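(* Let $S$ be an AG-groupoid with a zero element $0$. Let $\mathcal{D}$ be the set of all bi-ideals of $S$ and let $\Omega$ be the set of all strongly irreducible bi-ideals $J$ of $S$ with $J\neq S$. For $B\in\mathcal{D}$ put $O_{B}=\{J\in\Omega: B\not\subseteq J\}$. Then $\Gamma(\Omega)=\{O_{B}: B\in\mathcal{D}\}$ is a topology on $\Omega$. Moreover, the map $\phi:\mathcal{D}\to\Gamma(\Omega)$, $\phi(B)=O_{B}$, preserves finite intersections and arbitrary unions, in the sense that $\phi(B_{1}\cap B_{2})=\phi(B_{1})\cap\phi(B_{2})$ for all $B_1,B_2\in\mathcal D$ and $\phi(\langle\bigcup_{\alpha}B_{\alpha}\rangle)=\bigcup_{\alpha}\phi(B_{\alpha})$ for every family $\{B_\alpha\}\subseteq\mathcal D$, where $\langle X\rangle$ denotes the bi-ideal of $S$ generated by $X$ (the smallest bi-ideal containing $X$).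
   Context: An AG-groupoid is a set $S$ with a binary operation satisfying $(ab)c=(cb)a$ for all $a,b,c\in S$. A zero element is an element $0$ with $0s=s0=0$ for all $s\in S$. For nonempty subsets, $AB=\{ab:a\in A,b\in B\}$. A bi-ideal of $S$ is a nonempty subset $B$ with $BB\subseteq B$ and $(BS)B\subseteq B$. A bi-ideal $B$ is strongly irreducible if for all bi-ideals $B_{1},B_{2}$ of $S$, $B_{1}\cap B_{2}\subseteq B$ implies $B_{1}\subseteq B$ or $B_{2}\subseteq B$. *)

(* Defs.v *)
Set Implicit Arguments.

Definition set (T : Type) := T -> Prop.
Definition subset {T} (A B : set T) : Prop := forall x, A x -> B x.
Definition setI {T} (A B : set T) : set T := fun x => A x /\ B x.

Definition AG_groupoid {S : Type} (op : S -> S -> S) : Prop :=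
  forall a b c, op (op a b) c = op (op c b) a.

Definition is_zero {S : Type} (op : S -> S -> S) (z : S) : Prop :=
  forall s, op z s = z /\ op s z = z.

Definition setmul {S : Type} (op : S -> S -> S) (A B : set S) : set S :=
  fun x => exists a b, A a /\ B b /\ x = op a b.

Definition bi_ideal {S : Type} (op : S -> S -> S) (B : set S) : Prop :=
  (exists b, B b) /\
  subset (setmul op B B) B /\
  subset (setmul op (setmul op B (fun _ => True)) B) B.

Definition strongly_irreducible {S : Type} (op : S -> S -> S) (B : set S) : Prop :=
  bi_ideal op B /\
  forall B1 B2, bi_ideal op B1 -> bi_ideal op B2 ->
    subset (setI B1 B2) B -> subset B1 B \/ subset B2 B.

Definition Omega {S : Type} (op : S -> S -> S) : set (set S) :=
  fun J => strongly_irreducible op J /\ J <> (fun _ => True).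

Definition O_ {S : Type} (op : S -> S -> S) (B : set S) : set (set S) :=
  fun J => Omega op J /\ ~ subset B J.

Definition Gamma {S : Type} (op : S -> S -> S) : set (set (set S)) :=
  fun U => exists B, bi_ideal op B /\ U = O_ op B.

Definition gen_bi_ideal {S : Type} (op : S -> S -> S) (X : set S) : set S :=
  fun x => forall B, bi_ideal op B -> subset X B -> B x.

Definition is_topology {T : Type} (X : set T) (Top : set (set T)) : Prop :=
  (forall U, Top U -> subset U X) /\
  Top (fun _ => False) /\
  Top X /\
  (forall U V, Top U -> Top V -> Top (setI U V)) /\
  (forall C : set (set T), (forall U, C U -> Top U) ->
     Top (fun x => exists U, C U /\ U x)).

(* Main.v *)
Require Import Defs.
From Stdlib Require Import Classical FunctionalExtensionality PropExtensionality.

Section L.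
Context {S : Type} (op : S -> S -> S) (z : S) (Hz : is_zero op z).

Lemma z_in B : bi_ideal op B -> B z.
Proof.
  intros [[b Hb] [H1 H2]]. destruct (Hz b) as [Hzb Hbz].
  apply H2. exists (op b z), b. split; [|split; auto].
  - exists b, z. auto.
  - rewrite Hbz, Hzb. reflexivity.
Qed.

Lemma gen_bi X : bi_ideal op (gen_bi_ideal op X).
Proof.
  split; [|split].
  - exists z. intros B HB _. apply z_in; auto.
  - intros x [a [b [Ha [Hb ->]]]] B HB HX.
    destruct HB as [H0 [H1 H2]]. apply H1. exists a, b.
    split; [apply Ha|split;[apply Hb|]]; auto; split; auto.
  - intros x [a [b [Ha [Hb ->]]]] B HB HX.
    destruct Ha as [a' [s [Ha' [_ ->]]]].
    destruct HB as [H0 [H1 H2]]. apply H2. exists (op a' s), b.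
    split; [exists a', s; split; [apply Ha'|]; auto; split; auto|].
    split; [apply Hb|]; auto; split; auto.
Qed.

Lemma gen_sub X J : bi_ideal op J -> (subset (gen_bi_ideal op X) J <-> subset X J).
Proof.
  intros HJ; split.
  - intros H x Hx. apply H. intros B _ HB. auto.
  - intros H x Hx. apply Hx; auto.
Qed.

Lemma O_gen X : O_ op (gen_bi_ideal op X) = (fun J => Omega op J /\ ~ subset X J).
Proof.
  apply functional_extensionality; intro J. apply propositional_extensionality.
  unfold O_. split; intros [HO HN]; split; auto; intro HS; apply HN;
  (assert (HJ : bi_ideal op J) by (destruct HO as [[HJ _] _]; exact HJ));
  apply (@gen_sub X J HJ); auto.
Qed.

Lemma setI_bi B1 B2 : bi_ideal op B1 -> bi_ideal op B2 -> bi_ideal op (setI B1 B2).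
Proof.
  intros HB1 HB2. pose proof (@z_in B1 HB1). pose proof (@z_in B2 HB2).
  destruct HB1 as [_ [A1 A2]], HB2 as [_ [C1 C2]].
  split; [exists z; split; auto|split].
  - intros x [a [b [[Ha1 Ha2] [[Hb1 Hb2] ->]]]]. split.
    + apply A1; exists a, b; auto.
    + apply C1; exists a, b; auto.
  - intros x [a [b [Ha [[Hb1 Hb2] ->]]]].
    destruct Ha as [a' [s [[Ha1 Ha2] [_ ->]]]]. split.
    + apply A2. exists (op a' s), b. split; auto. exists a', s; auto.
    + apply C2. exists (op a' s), b. split; auto. exists a', s; auto.
Qed.

Lemma O_I B1 B2 : bi_ideal op B1 -> bi_ideal op B2 ->
     O_ op (setI B1 B2) = setI (O_ op B1) (O_ op B2).
Proof.
  intros HB1 HB2. apply functional_extensionality; intro J.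
  apply propositional_extensionality. unfold O_, setI. split.
  - intros [HO HN]. split; split; auto; intro HS; apply HN; intros x [Hx1 Hx2]; auto.
  - intros [[HO HN1] [_ HN2]]. split; auto. intro HS.
    destruct HO as [[HJ Hirr] _].
    destruct (Hirr B1 B2 HB1 HB2 HS); auto.
Qed.

End L.

Theorem theorem2 (S : Type) (op : S -> S -> S) (z : S)
  (HAG : AG_groupoid op) (Hz : is_zero op z) :
  is_topology (Omega op) (Gamma op) /\
  (forall B1 B2, bi_ideal op B1 -> bi_ideal op B2 ->
     O_ op (setI B1 B2) = setI (O_ op B1) (O_ op B2)) /\
  (forall (I : Type) (B : I -> set S), (forall i, bi_ideal op (B i)) ->
     O_ op (gen_bi_ideal op (fun x => exists i, B i x))
     = (fun J => exists i, O_ op (B i) J)).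
Proof.
  assert (Hzb : bi_ideal op (fun x => x = z)).
  { split; [exists z; auto|split].
    - intros x [a [b [-> [-> ->]]]]. apply (Hz z).
    - intros x [a [b [[a' [s [-> [_ ->]]]] [-> ->]]]].
      rewrite (proj1 (Hz s)). apply (Hz z). }
  assert (HSb : bi_ideal op (fun _ => True)).
  { split; [exists z; auto|split; intros x _; auto]. }
  split; [|split].
  - split; [|split; [|split; [|split]]].
    + intros U [B [_ ->]] J [HO _]. exact HO.
    + exists (fun x => x = z). split; auto.
      apply functional_extensionality; intro J. apply propositional_extensionality.
      split; [intros []|]. intros [[[HJ _] _] HN]. apply HN.
      intros x ->. apply (@z_in S op z Hz J HJ).
    + exists (fun _ => True). split; auto.
      apply functional_extensionality; intro J. apply propositional_extensionality.
      unfold O_. split; [intros HO; split; auto|intros [HO _]; auto].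
      intro HS. destruct HO as [_ HO]. apply HO.
      apply functional_extensionality; intro x. apply propositional_extensionality.
      split; auto.
    + intros U V [B1 [H1 ->]] [B2 [H2 ->]]. exists (setI B1 B2).
      split; [apply (@setI_bi S op z Hz); auto|]. symmetry; apply (@O_I S op); auto.
    + intros C HC.
      set (X := fun x => exists U, C U /\ exists B, bi_ideal op B /\ U = O_ op B /\ B x).
      exists (gen_bi_ideal op X). split; [apply (@gen_bi S op z Hz)|].
      rewrite (@O_gen S op X).
      apply functional_extensionality; intro J. apply propositional_extensionality.
      split.
      * intros [U [HU HUJ]]. destruct (HC U HU) as [B [HB ->]].
        destruct HUJ as [HO HN]. split; auto. intro HS. apply HN.
        intros x Hx. apply HS. exists (O_ op B). split; auto. exists B; auto.
      * intros [HO HN]. apply not_all_ex_not in HN. destruct HN as [x Hx].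
        apply imply_to_and in Hx. destruct Hx as [[U [HU [B [HB [-> HBx]]]]] HJx].
        exists (O_ op B). split; auto. split; auto.
  - intros; apply (@O_I S op); auto.
  - intros I B HB. rewrite (@O_gen S op).
    apply functional_extensionality; intro J. apply propositional_extensionality.
    split.
    + intros [HO HN]. apply not_all_ex_not in HN. destruct HN as [x Hx].
      apply imply_to_and in Hx. destruct Hx as [[i Hi] HJx].
      exists i. split; auto.
    + intros [i [HO HN]]. split; auto. intro HS. apply HN. intros x Hx.
      apply HS. exists i; auto.
Qed.
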